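(* Let $\mathbf p$ be an agreeable memory-one strategy for X with $p_2<1$. (a) If $\mathbf p$ is good, then whenever Y uses a memory-one strategy $\mathbf q$ that is not agreeable (with any initial plays), every associated limit distribution gives $s_Y<R$. (b) If $\mathbf p$ is not good, then for at least one of the two memory-one strategies $\mathbf q=(0,0,0,0)$ or $\mathbf q=(0,1,1,1)$ for Y, every associated limit distribution gives $s_Y\ge R$ and $s_X<R$. (c) If $\mathbf p$ is not of Nash type, then for at least one of the two memory-one strategies $\mathbf q=(0,0,0,0)$ or $\mathbf q=(0,1,1,1)$ for Y, every associated limit distribution gives $s_Y>R$ and $s_X<R$.
   Context: Iterated Prisoner's Dilemma: payoffs $T>R>P>S$ with $2R>T+S$; outcomes of a round are ordered $cc,cd,dc,dd$ (first letter X's play, second Y's; $c$ = cooperate, $d$ = defect); payoff vectors $\mathbf S_X=(R,S,T,P)$, $\mathbf S_Y=(R,T,S,P)$. A memory-one strategy for X is $\mathbf p=(p_1,p_2,p_3,p_4)\in[0,1]^4$, where $p_i$ is the probability that X plays $c$ in the next round given that the current round had the $i$-th outcome. A memory-one strategy for Y is $\mathbf q=(q_1,q_2,q_3,q_4)\in[0,1]^4$ where $q_1,q_2,q_3,q_4$ are the probabilities that Y plays $c$ after the outcomes $cc,dc,cd,dd$ respectively (i.e. indexed from Y's own perspective). A strategy pattern for Y is an arbitrary (possibly randomized and history-dependent) rule for Y's play in each round. Given initial plays and the rules used, let $\mathbf v^n$ be the probability distribution of the outcome of round $n$; a limit distribution is any limit point $\mathbf v$ of the Cesàro averages $\frac1n\sum_{k=1}^n\mathbf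 v^k$, and the associated expected payoffs are $s_X=\langle\mathbf v\cdot\mathbf S_X\rangle$, $s_Y=\langle\mathbf v\cdot\mathbf S_Y\rangle$. A strategy is agreeable if its first entry is $1$. $\mathbf p$ is of Nash type if it is agreeable and, for every strategy pattern of Y and every associated limit distribution, $s_Y\ge R$ implies $s_Y=R$. $\mathbf p$ is good if it is agreeable and, for every strategy pattern of Y and every associated limit distribution, $s_Y\ge R$ implies $s_Y=s_X=R$. *)

(* Defs.v *)
From Stdlib Require Import Reals List.
Import ListNotations.
Open Scope R_scope.

(* Outcomes of a round, X's play first: cc, cd, dc, dd. *)
Inductive outcome : Set := CC | CD | DC | DD.

Definition outcomes : list outcome := [CC; CD; DC; DD].

Definition is_prob (x : R) : Prop := 0 <= x <= 1.

(* A memory-one strategy for X: p o = probability X plays c after outcome o,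
   i.e. p CC = p1, p CD = p2, p DC = p3, p DD = p4. *)
Definition memory_one (p : outcome -> R) : Prop := forall o, is_prob (p o).

(* Y's memory-one vector q = (q1,q2,q3,q4) is indexed from Y's perspective:
   q1,q2,q3,q4 are used after outcomes cc, dc, cd, dd (X's play written first). *)
Definition qvec (q1 q2 q3 q4 : R) : outcome -> R :=
  fun o => match o with CC => q1 | DC => q2 | CD => q3 | DD => q4 end.

(* A history is the list of outcomes so far, MOST RECENT FIRST. *)
Definition history := list outcome.

(* A strategy pattern for Y (behavioural form): the probability that Y
   cooperates in the next round, as an arbitrary function of the history. *)
Definition pattern := history -> R.
Definition valid_pattern (y : pattern) : Prop := forall h, is_prob (y h).

(* Y using the memory-one strategy with outcome-indexed vector q and
   initial play y0 (true = c). *)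
Definition ymem1 (q : outcome -> R) (y0 : bool) : pattern :=
  fun h => match h with [] => if y0 then 1 else 0 | o :: _ => q o end.

Definition xprob (p : outcome -> R) (x0 : bool) (h : history) : R :=
  match h with [] => if x0 then 1 else 0 | o :: _ => p o end.

Definition step (a b : R) (o : outcome) : R :=
  match o with
  | CC => a * b | CD => a * (1 - b) | DC => (1 - a) * b | DD => (1 - a) * (1 - b)
  end.

Fixpoint hprob (p : outcome -> R) (x0 : bool) (y : pattern) (h : history) : R :=
  match h with
  | [] => 1
  | o :: h' => hprob p x0 y h' * step (xprob p x0 h') (y h') o
  end.

Fixpoint histories (n : nat) : list history :=
  match n with
  | O => [[]]
  | S k => flat_map (fun h => map (fun o => o :: h) outcomes) (histories k)
  end.

Definition sumR (l : list R) : R := fold_right Rplus 0 l.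

(* v^(k+1): distribution of the outcome of round k+1. *)
Definition vround (p : outcome -> R) (x0 : bool) (y : pattern) (k : nat) (o : outcome) : R :=
  sumR (map (fun h => hprob p x0 y h * step (xprob p x0 h) (y h) o) (histories k)).

Definition cesaro (p : outcome -> R) (x0 : bool) (y : pattern) (n : nat) (o : outcome) : R :=
  / INR (S n) * sumR (map (fun k => vround p x0 y k o) (seq 0 (S n))).

Definition limit_point (a : nat -> outcome -> R) (v : outcome -> R) : Prop :=
  forall eps, eps > 0 -> forall N : nat, exists n : nat,
    (N <= n)%nat /\ forall o, Rabs (a n o - v o) < eps.

Definition limit_dist (p : outcome -> R) (x0 : bool) (y : pattern) (v : outcome -> R) : Prop :=
  limit_point (cesaro p x0 y) v.

(* Expected payoffs, S_X = (R,S,T,P), S_Y = (R,T,S,P). *)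
Definition sX (T Rw P S : R) (v : outcome -> R) : R :=
  v CC * Rw + v CD * S + v DC * T + v DD * P.
Definition sY (T Rw P S : R) (v : outcome -> R) : R :=
  v CC * Rw + v CD * T + v DC * S + v DD * P.

Definition agreeable (p : outcome -> R) : Prop := p CC = 1.

Definition nash_type (T Rw P S : R) (p : outcome -> R) : Prop :=
  agreeable p /\
  forall (x0 : bool) (y : pattern) (v : outcome -> R),
    valid_pattern y -> limit_dist p x0 y v ->
    sY T Rw P S v >= Rw -> sY T Rw P S v = Rw.

Definition good (T Rw P S : R) (p : outcome -> R) : Prop :=
  agreeable p /\
  forall (x0 : bool) (y : pattern) (v : outcome -> R),
    valid_pattern y -> limit_dist p x0 y v ->
    sY T Rw P S v >= Rw -> sY T Rw P S v = Rw /\ sX T Rw P S v = Rw.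

(* Main.v *)
Require Import Defs.
From Stdlib Require Import Reals List Lra Lia Psatz.
Import ListNotations.
Open Scope R_scope.

Definition lin (f w : outcome -> R) : R :=
  f CC * w CC + f CD * w CD + f DC * w DC + f DD * w DD.

Lemma sumR_app l1 l2 : sumR (l1 ++ l2) = sumR l1 + sumR l2.
Proof. induction l1; simpl; [ring| rewrite IHl1; ring]. Qed.

Lemma sumR_ext {A} (f g : A -> R) l : (forall x, f x = g x) -> sumR (map f l) = sumR (map g l).
Proof. intros H; induction l; simpl; [reflexivity| rewrite H, IHl; reflexivity]. Qed.

Lemma sumR_minus {A} (f g : A -> R) l :
  sumR (map (fun x => f x - g x) l) = sumR (map f l) - sumR (map g l).
Proof. induction l; simpl; [ring | rewrite IHl; ring]. Qed.

Lemma sumR_scal {A} (f : A -> R) c l : sumR (map (fun x => c * f x) l) = c * sumR (map f l).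
Proof. induction l; simpl; [ring | rewrite IHl; ring]. Qed.

Lemma sumR_le {A} (f g : A -> R) l : (forall x, f x <= g x) -> sumR (map f l) <= sumR (map g l).
Proof. intros H; induction l; simpl; [lra| specialize (H a); lra]. Qed.

Lemma sumR_zero {A} (f : A -> R) l : (forall x, In x l -> f x = 0) -> sumR (map f l) = 0.
Proof. intros H; induction l; simpl; [reflexivity|].
  rewrite H by (left; reflexivity). rewrite IHl by (intros; apply H; right; auto). ring. Qed.

Lemma lin_sumR {A} (F : A -> outcome -> R) l w :
  sumR (map (fun x => F x CC) l) * w CC + sumR (map (fun x => F x CD) l) * w CD
  + sumR (map (fun x => F x DC) l) * w DC + sumR (map (fun x => F x DD) l) * w DD
  = sumR (map (fun x => lin (F x) w) l).
Proof. induction l; simpl; [ring | rewrite <- IHl; unfold lin; ring]. Qed.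

Lemma hist_S (G : history -> R) k : sumR (map G (histories (S k))) =
  sumR (map (fun h => G (CC::h) + G (CD::h) + G (DC::h) + G (DD::h)) (histories k)).
Proof.
  simpl. induction (histories k) as [|h l IH]; simpl; [reflexivity|].
  rewrite IH. ring.
Qed.

Lemma step_nonneg a b o : 0<=a<=1 -> 0<=b<=1 -> 0 <= step a b o.
Proof. intros; destruct o; simpl; nra. Qed.

Lemma xprob_prob p x0 h : memory_one p -> 0 <= xprob p x0 h <= 1.
Proof. intros Hp; destruct h; simpl; [destruct x0; lra | apply Hp]. Qed.

Lemma hprob_nonneg p x0 y h : memory_one p -> valid_pattern y -> 0 <= hprob p x0 y h.
Proof. intros Hp Hy; induction h; simpl; [lra|].
  apply Rmult_le_pos; [exact IHh| apply step_nonneg; [apply xprob_prob; auto| apply Hy]]. Qed.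

Lemma sum_hprob p x0 y k : sumR (map (fun h => hprob p x0 y h) (histories k)) = 1.
Proof.
  induction k; [simpl; ring|].
  rewrite hist_S. rewrite <- IHk. apply sumR_ext. intros h. simpl. ring.
Qed.

Lemma vround_lin p x0 y k w : lin (vround p x0 y k) w =
  sumR (map (fun h => hprob p x0 y h * lin (step (xprob p x0 h) (y h)) w) (histories k)).
Proof.
  transitivity (sumR (map (fun h => lin (fun o => hprob p x0 y h * step (xprob p x0 h) (y h) o) w) (histories k))).
  - unfold vround. exact (lin_sumR (fun h o => hprob p x0 y h * step (xprob p x0 h) (y h) o) _ w).
  - apply sumR_ext; intro h; unfold lin; ring.
Qed.

Lemma cesaro_lin p x0 y n w : lin (cesaro p x0 y n) w =
  / INR (S n) * sumR (map (fun k => lin (vround p x0 y k) w) (seq 0 (S n))).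
Proof.
  unfold cesaro, lin at 1. rewrite <- (lin_sumR (fun k o => vround p x0 y k o)). ring.
Qed.

Definition coopsum p x0 y (f : history -> R) k :=
  sumR (map (fun h => hprob p x0 y h * f h) (histories k)).

Lemma telescope_step p x0 y f g e k :
  (forall o h, f (o::h) = g o) ->
  (forall h, lin (step (xprob p x0 h) (y h)) e = f h) ->
  lin (vround p x0 y k) (fun o => g o - e o) = coopsum p x0 y f (S k) - coopsum p x0 y f k.
Proof.
  intros Hf He. rewrite vround_lin. unfold coopsum. rewrite hist_S, <- sumR_minus.
  apply sumR_ext; intros h. rewrite !Hf, <- He. unfold lin. simpl. ring.
Qed.

Lemma tele_sum (C : nat -> R) m n :
  sumR (map (fun k => C (S k) - C k) (seq m n)) = C (m+n)%nat - C m.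
Proof. revert m; induction n; intros m; simpl.
  - rewrite Nat.add_0_r; ring.
  - rewrite IHn, Nat.add_succ_r. simpl. ring. Qed.

Lemma coopsum_bounds p x0 y f k : memory_one p -> valid_pattern y ->
  (forall h, 0 <= f h <= 1) -> 0 <= coopsum p x0 y f k <= 1.
Proof.
  intros Hp Hy Hf. unfold coopsum. split.
  - replace 0 with (sumR (map (fun _ : history => 0) (histories k))).
    + apply sumR_le. intros h. apply Rmult_le_pos; [apply hprob_nonneg; auto| apply Hf].
    + apply sumR_zero; auto.
  - rewrite <- (sum_hprob p x0 y k). apply sumR_le. intros h.
    pose proof (hprob_nonneg p x0 y h Hp Hy). pose proof (Hf h). nra.
Qed.

Lemma prod_bound e x w : -e < x < e -> -1 <= w <= 1 -> -e <= x*w <= e.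
Proof. intros; split; nra. Qed.

Lemma lp_lin (a : nat -> outcome -> R) v w c C :
  0 <= C -> (forall o, -1 <= w o <= 1) ->
  (forall n, - (C * / INR (S n)) <= lin (a n) w - c <= C * / INR (S n)) ->
  limit_point a v -> lin v w = c.
Proof.
  intros HC Hw Hb Hlp.
  destruct (Req_dec (lin v w) c) as [E|NE]; [exact E|exfalso].
  assert (Hd : Rabs (lin v w - c) > 0) by (apply Rabs_pos_lt; lra).
  set (d := Rabs (lin v w - c)) in *.
  destruct (archimed_cor1 (d / (2 * (C + 1)))) as [N [HN HN0]].
  { apply Rdiv_lt_0_compat; lra. }
  destruct (Hlp (d/8) ltac:(lra) N) as [n [Hn Ho]].
  specialize (Hb n).
  assert (HI : / INR (S n) <= / INR N).
  { apply Rinv_le_contravar. apply lt_0_INR; lia. apply le_INR; lia. }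
  assert (Hx : d / (2 * (C + 1)) * (C + 1) = d / 2) by (field; lra).
  assert (HCI : C * / INR (S n) < d / 2).
  { assert (C * / INR (S n) <= C * / INR N) by (apply Rmult_le_compat_l; lra).
    assert (C * / INR N <= C * (d / (2 * (C + 1)))) by (apply Rmult_le_compat_l; lra).
    assert (0 < d / (2 * (C + 1))) by (apply Rdiv_lt_0_compat; lra).
    nra. }
  assert (B : forall o, -(d/8) <= (a n o - v o) * w o <= d/8).
  { intros o. apply prod_bound; [|apply Hw]. destruct (Rabs_def2 _ _ (Ho o)); lra. }
  pose proof (B CC); pose proof (B CD); pose proof (B DC); pose proof (B DD).
  assert (Hdiff : -(d/2) <= lin (a n) w - lin v w <= d/2).
  { unfold lin in *. lra. }
  unfold d in *. destruct (Rcase_abs (lin v w - c)) as [Hl|Hr].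
  - rewrite Rabs_left in * by lra. lra.
  - rewrite Rabs_right in * by lra. lra.
Qed.

Lemma lp_nonneg (a : nat -> outcome -> R) v o :
  (forall n, 0 <= a n o) -> limit_point a v -> 0 <= v o.
Proof.
  intros H Hlp. destruct (Rle_lt_dec 0 (v o)) as [|Hl]; [auto|exfalso].
  destruct (Hlp (- v o) ltac:(lra) 0%nat) as [n [_ Ho]].
  destruct (Rabs_def2 _ _ (Ho o)). specialize (H n). lra.
Qed.

Lemma sumR_const_seq m n : sumR (map (fun _ : nat => 1) (seq m n)) = INR n.
Proof. revert m; induction n; intros m; [reflexivity|]. cbn [seq map sumR].
  rewrite (S_INR n). simpl. rewrite IHn. ring. Qed.

Lemma INR_S_pos n : 0 < INR (S n).
Proof. apply lt_0_INR; lia. Qed.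

Lemma akin_gen p x0 y f g e :
  memory_one p -> valid_pattern y ->
  (forall h, 0 <= f h <= 1) ->
  (forall o h, f (o::h) = g o) ->
  (forall h, lin (step (xprob p x0 h) (y h)) e = f h) ->
  (forall o, -1 <= g o - e o <= 1) ->
  forall v, limit_dist p x0 y v -> lin v (fun o => g o - e o) = 0.
Proof.
  intros Hp Hy Hf Hfg He Hb v Hv.
  apply (lp_lin (cesaro p x0 y) v _ 0 1 ltac:(lra) Hb); [|exact Hv].
  intros n. rewrite cesaro_lin.
  rewrite (sumR_ext _ (fun k => coopsum p x0 y f (S k) - coopsum p x0 y f k))
    by (intros; apply telescope_step; auto).
  rewrite tele_sum. simpl (0 + S n)%nat.
  pose proof (coopsum_bounds p x0 y f (S n) Hp Hy Hf).
  pose proof (coopsum_bounds p x0 y f 0 Hp Hy Hf).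
  pose proof (INR_S_pos n). assert (0 < / INR (S n)) by (apply Rinv_0_lt_compat; lra).
  split; nra.
Qed.

Definition one : outcome -> R := fun _ => 1.

Lemma vround_nonneg p x0 y k o : memory_one p -> valid_pattern y -> 0 <= vround p x0 y k o.
Proof.
  intros Hp Hy. unfold vround.
  replace 0 with (sumR (map (fun _ : history => 0) (histories k))) by (apply sumR_zero; auto).
  apply sumR_le. intros h. apply Rmult_le_pos; [apply hprob_nonneg; auto|].
  apply step_nonneg; [apply xprob_prob; auto| apply Hy].
Qed.

Lemma vround_one p x0 y k : lin (vround p x0 y k) one = 1.
Proof.
  rewrite vround_lin. rewrite <- (sum_hprob p x0 y k). apply sumR_ext. intros h.
  unfold lin, one; simpl. ring.
Qed.

Lemma dist_basic p x0 y v : memory_one p -> valid_pattern y -> limit_dist p x0 y v ->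
  0 <= v CC /\ 0 <= v CD /\ 0 <= v DC /\ 0 <= v DD /\ v CC + v CD + v DC + v DD = 1.
Proof.
  intros Hp Hy Hv.
  assert (Hnn : forall o, 0 <= v o).
  { intros o. apply (lp_nonneg (cesaro p x0 y)); [|exact Hv]. intros n. unfold cesaro.
    apply Rmult_le_pos; [left; apply Rinv_0_lt_compat, INR_S_pos|].
    replace 0 with (sumR (map (fun _ : nat => 0) (seq 0 (S n)))) by (apply sumR_zero; auto).
    apply sumR_le. intros k. apply vround_nonneg; auto. }
  assert (Hs : lin v one = 1).
  { apply (lp_lin (cesaro p x0 y) v one 1 0 ltac:(lra)); [intros; unfold one; lra | | exact Hv].
    intros n. rewrite cesaro_lin. rewrite (sumR_ext _ (fun _ => 1)) by (intros; apply vround_one).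
    rewrite sumR_const_seq. rewrite Rinv_l by (apply Rgt_not_eq, INR_S_pos). lra. }
  unfold lin, one in Hs. repeat split; try apply Hnn. lra.
Qed.

Lemma akinX p x0 y v : memory_one p -> valid_pattern y -> limit_dist p x0 y v ->
  v CC * (p CC - 1) + v CD * (p CD - 1) + v DC * p DC + v DD * p DD = 0.
Proof.
  intros Hp Hy Hv.
  pose proof (akin_gen p x0 y (xprob p x0) p
    (fun o => match o with CC | CD => 1 | _ => 0 end) Hp Hy) as H.
  assert (Hl : lin v (fun o => p o - match o with CC | CD => 1 | _ => 0 end) = 0).
  { apply H; auto.
    - intros; apply xprob_prob; auto.
    - intros h. unfold lin; simpl. ring.
    - intros o; destruct (Hp o); destruct o; lra. }
  unfold lin in Hl. lra.
Qed.

Lemma ymem1_valid q y0 : memory_one q -> valid_pattern (ymem1 q y0).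
Proof. intros Hq h; destruct h; simpl; [destruct y0; unfold is_prob; lra| apply Hq]. Qed.

Lemma akinY p x0 q y0 v : memory_one p -> memory_one q -> limit_dist p x0 (ymem1 q y0) v ->
  v CC * (q CC - 1) + v CD * q CD + v DC * (q DC - 1) + v DD * q DD = 0.
Proof.
  intros Hp Hq Hv.
  pose proof (akin_gen p x0 (ymem1 q y0) (ymem1 q y0) q
    (fun o => match o with CC | DC => 1 | _ => 0 end) Hp (ymem1_valid q y0 Hq)) as H.
  assert (Hl : lin v (fun o => q o - match o with CC | DC => 1 | _ => 0 end) = 0).
  { apply H; auto.
    - intros; apply (ymem1_valid q y0 Hq).
    - intros h. unfold lin; simpl. ring.
    - intros o; destruct (Hq o); destruct o; lra. }
  unfold lin in Hl. lra.
Qed.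

Lemma vround_DD_zero p x0 y0 k : p CC = 1 ->
  vround p x0 (ymem1 (qvec 0 1 1 1) y0) (S k) DD = 0.
Proof. intros H1. unfold vround. rewrite hist_S. apply sumR_zero. intros h _.
  simpl. rewrite H1. ring. Qed.

Lemma vDD_zero p x0 y0 v : memory_one p -> p CC = 1 ->
  limit_dist p x0 (ymem1 (qvec 0 1 1 1) y0) v -> v DD = 0.
Proof.
  intros Hp H1 Hv.
  set (w := fun o => match o with DD => 1 | _ => 0 end).
  assert (Hq : memory_one (qvec 0 1 1 1)) by (intros o; destruct o; simpl; unfold is_prob; lra).
  assert (Hy := ymem1_valid _ y0 Hq).
  assert (lin v w = 0).
  { apply (lp_lin (cesaro p x0 (ymem1 (qvec 0 1 1 1) y0)) v w 0 1 ltac:(lra)); [intros o; destruct o; simpl; lra| |exact Hv].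
    intros n. rewrite cesaro_lin. simpl seq. simpl map. simpl sumR.
    rewrite (sumR_zero (fun k => lin (vround p x0 (ymem1 (qvec 0 1 1 1) y0) k) w)).
    2:{ intros k Hk. apply in_seq in Hk. destruct k; [lia|].
        unfold lin, w. rewrite vround_DD_zero by auto. ring. }
    assert (A : 0 <= vround p x0 (ymem1 (qvec 0 1 1 1) y0) 0 DD).
    { apply vround_nonneg; auto. }
    pose proof (vround_one p x0 (ymem1 (qvec 0 1 1 1) y0) 0).
    pose proof (vround_nonneg p x0 (ymem1 (qvec 0 1 1 1) y0) 0 CC Hp Hy).
    pose proof (vround_nonneg p x0 (ymem1 (qvec 0 1 1 1) y0) 0 CD Hp Hy).
    pose proof (vround_nonneg p x0 (ymem1 (qvec 0 1 1 1) y0) 0 DC Hp Hy).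
    unfold lin, w, one in *.
    pose proof (INR_S_pos n). assert (0 < / INR (S n)) by (apply Rinv_0_lt_compat; lra).
    split; nra. }
  unfold lin, w in H. lra.
Qed.

Lemma qvec_mem q1 q2 q3 q4 : is_prob q1 -> is_prob q2 -> is_prob q3 -> is_prob q4 ->
  memory_one (qvec q1 q2 q3 q4).
Proof. intros; intros o; destruct o; simpl; auto. Qed.

Lemma strict_good T Rw P S p :
  T > Rw -> Rw > P -> P > S -> memory_one p -> agreeable p -> p CD < 1 ->
  (T - Rw) * p DC < (Rw - S) * (1 - p CD) ->
  (T - Rw) * p DD < (Rw - P) * (1 - p CD) -> good T Rw P S p.
Proof.
  intros HTR HRP HPS Hp Hagr Hp2 H3 H4. split; [exact Hagr|].
  intros x0 y v Hy Hv HsY.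
  destruct (dist_basic p x0 y v Hp Hy Hv) as [a1 [a2 [a3 [a4 Hs]]]].
  pose proof (akinX p x0 y v Hp Hy Hv) as A. unfold agreeable in Hagr. rewrite Hagr in A.
  unfold sY, sX in *.
  assert (E : (1 - p CD) * (v CC * Rw + v CD * T + v DC * S + v DD * P - Rw) =
     v DC * ((T - Rw) * p DC - (Rw - S) * (1 - p CD)) + v DD * ((T - Rw) * p DD - (Rw - P) * (1 - p CD))).
  { replace (v CC) with (1 - v CD - v DC - v DD) by lra.
    transitivity ((T - Rw) * (v CD * (1 - p CD)) - (1 - p CD) * (v DC * (Rw - S) + v DD * (Rw - P))); [ring|].
    replace (v CD * (1 - p CD)) with (v DC * p DC + v DD * p DD) by lra. ring. }
  assert (0 <= (1 - p CD) * (v CC * Rw + v CD * T + v DC * S + v DD * P - Rw)) by nra.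
  assert (v DC * ((T - Rw) * p DC - (Rw - S) * (1 - p CD)) <= 0) by nra.
  assert (v DD * ((T - Rw) * p DD - (Rw - P) * (1 - p CD)) <= 0) by nra.
  assert (v DC = 0) by nra. assert (v DD = 0) by nra.
  assert (v CD = 0) by nra.
  assert (v CC = 1) by lra. split; nra.
Qed.

Lemma weak_nash T Rw P S p :
  T > Rw -> Rw > P -> P > S -> memory_one p -> agreeable p -> p CD < 1 ->
  (T - Rw) * p DC <= (Rw - S) * (1 - p CD) ->
  (T - Rw) * p DD <= (Rw - P) * (1 - p CD) -> nash_type T Rw P S p.
Proof.
  intros HTR HRP HPS Hp Hagr Hp2 H3 H4. split; [exact Hagr|].
  intros x0 y v Hy Hv HsY.
  destruct (dist_basic p x0 y v Hp Hy Hv) as [a1 [a2 [a3 [a4 Hs]]]].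
  pose proof (akinX p x0 y v Hp Hy Hv) as A. unfold agreeable in Hagr. rewrite Hagr in A.
  unfold sY, sX in *.
  assert (E : (1 - p CD) * (v CC * Rw + v CD * T + v DC * S + v DD * P - Rw) =
     v DC * ((T - Rw) * p DC - (Rw - S) * (1 - p CD)) + v DD * ((T - Rw) * p DD - (Rw - P) * (1 - p CD))).
  { replace (v CC) with (1 - v CD - v DC - v DD) by lra.
    transitivity ((T - Rw) * (v CD * (1 - p CD)) - (1 - p CD) * (v DC * (Rw - S) + v DD * (Rw - P))); [ring|].
    replace (v CD * (1 - p CD)) with (v DC * p DC + v DD * p DD) by lra. ring. }
  assert (v DC * ((T - Rw) * p DC - (Rw - S) * (1 - p CD)) <= 0) by nra.
  assert (v DD * ((T - Rw) * p DD - (Rw - P) * (1 - p CD)) <= 0) by nra.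
  assert ((1 - p CD) * (v CC * Rw + v CD * T + v DC * S + v DD * P - Rw) <= 0) by lra.
  assert (v CC * Rw + v CD * T + v DC * S + v DD * P - Rw <= 0) by nra.
  lra.
Qed.

Lemma allD_case T Rw P S p :
  T > Rw -> Rw > P -> P > S -> memory_one p -> agreeable p -> p CD < 1 ->
  (T - Rw) * p DD >= (Rw - P) * (1 - p CD) ->
  forall x0 y0 v, limit_dist p x0 (ymem1 (qvec 0 0 0 0) y0) v ->
  sY T Rw P S v >= Rw /\ sX T Rw P S v < Rw /\
  ((T - Rw) * p DD > (Rw - P) * (1 - p CD) -> sY T Rw P S v > Rw).
Proof.
  intros HTR HRP HPS Hp Hagr Hp2 H4 x0 y0 v Hv.
  assert (Hq : memory_one (qvec 0 0 0 0)) by (apply qvec_mem; unfold is_prob; lra).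
  pose proof (ymem1_valid _ y0 Hq) as Hy.
  destruct (dist_basic p x0 _ v Hp Hy Hv) as [a1 [a2 [a3 [a4 Hs]]]].
  pose proof (akinX p x0 _ v Hp Hy Hv) as A. unfold agreeable in Hagr. rewrite Hagr in A.
  pose proof (akinY p x0 _ y0 v Hp Hq Hv) as B. simpl in B.
  assert (Z1 : v CC = 0) by lra. assert (Z3 : v DC = 0) by lra.
  unfold sY, sX.
  assert (E : (1 - p CD) * (v CC * Rw + v CD * T + v DC * S + v DD * P - Rw) =
     v DD * ((T - Rw) * p DD - (Rw - P) * (1 - p CD))).
  { replace (v CC) with (1 - v CD - v DC - v DD) by lra.
    transitivity ((T - Rw) * (v CD * (1 - p CD)) - (1 - p CD) * (v DC * (Rw - S) + v DD * (Rw - P))); [ring|].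
    replace (v CD * (1 - p CD)) with (v DC * p DC + v DD * p DD) by lra. rewrite Z3. ring. }
  assert (0 <= v DD * ((T - Rw) * p DD - (Rw - P) * (1 - p CD))) by nra.
  split; [|split].
  - assert (0 <= v CC * Rw + v CD * T + v DC * S + v DD * P - Rw) by nra. lra.
  - nra.
  - intros H4'. assert (v DD > 0).
    { destruct (Rle_lt_dec (v DD) 0); [|lra]. exfalso.
      assert (v DD = 0) by lra. assert (v CD = 1) by lra. nra. }
    assert (0 < v DD * ((T - Rw) * p DD - (Rw - P) * (1 - p CD))) by nra.
    assert (0 < v CC * Rw + v CD * T + v DC * S + v DD * P - Rw) by nra. lra.
Qed.

Lemma c0111_case T Rw P S p :
  T > Rw -> Rw > P -> P > S -> 2 * Rw > T + S -> memory_one p -> agreeable p -> p CD < 1 ->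
  (T - Rw) * p DC >= (Rw - S) * (1 - p CD) ->
  forall x0 y0 v, limit_dist p x0 (ymem1 (qvec 0 1 1 1) y0) v ->
  sY T Rw P S v >= Rw /\ sX T Rw P S v < Rw /\
  ((T - Rw) * p DC > (Rw - S) * (1 - p CD) -> sY T Rw P S v > Rw).
Proof.
  intros HTR HRP HPS H2R Hp Hagr Hp2 H3 x0 y0 v Hv.
  assert (Hq : memory_one (qvec 0 1 1 1)) by (apply qvec_mem; unfold is_prob; lra).
  pose proof (ymem1_valid _ y0 Hq) as Hy.
  destruct (dist_basic p x0 _ v Hp Hy Hv) as [a1 [a2 [a3 [a4 Hs]]]].
  pose proof (vDD_zero p x0 y0 v Hp Hagr Hv) as Z.
  pose proof (akinX p x0 _ v Hp Hy Hv) as A. unfold agreeable in Hagr. rewrite Hagr in A.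
  pose proof (akinY p x0 _ y0 v Hp Hq Hv) as B. simpl in B.
  assert (v CC = v CD) by lra.
  assert (A' : v CD * (1 - p CD) = v DC * p DC) by (rewrite Z in A; lra).
  assert (Hpos : v DC > 0).
  { destruct (Rle_lt_dec (v DC) 0); [|lra]. exfalso.
    assert (v DC = 0) by lra. assert (v CD * (1 - p CD) = 0) by nra.
    assert (v CD = 0) by nra. lra. }
  unfold sY, sX.
  assert (E1 : (1 - p CD) * (v CC * Rw + v CD * T + v DC * S + v DD * P - Rw) =
     v DC * ((T - Rw) * p DC - (Rw - S) * (1 - p CD))).
  { replace (v CC) with (1 - v CD - v DC - v DD) by lra.
    transitivity ((T - Rw) * (v CD * (1 - p CD)) - (1 - p CD) * (v DC * (Rw - S) + v DD * (Rw - P))); [ring|].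
    rewrite A', Z. ring. }
  assert (E2 : (1 - p CD) * (Rw - (v CC * Rw + v CD * S + v DC * T + v DD * P)) =
     v DC * ((Rw - S) * p DC - (T - Rw) * (1 - p CD))).
  { replace (v CC) with (v CD) by lra. rewrite Z.
    replace Rw with (Rw * (2 * v CD + v DC)) at 1 by nra.
    transitivity ((Rw - S) * (v CD * (1 - p CD)) - (1 - p CD) * (v DC * (T - Rw))); [ring|].
    rewrite A'. ring. }
  assert (K : (T - Rw) * ((Rw - S) * p DC - (T - Rw) * (1 - p CD)) > 0).
  { assert ((T - Rw) * ((Rw - S) * p DC) >= (Rw - S) * ((Rw - S) * (1 - p CD))) by nra.
    assert ((Rw - S) * (Rw - S) > (T - Rw) * (T - Rw)) by nra.
    nra. }
  assert (K' : (Rw - S) * p DC - (T - Rw) * (1 - p CD) > 0) by nra.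
  split; [|split].
  - assert (0 <= v DC * ((T - Rw) * p DC - (Rw - S) * (1 - p CD))) by nra. nra.
  - assert (0 < v DC * ((Rw - S) * p DC - (T - Rw) * (1 - p CD))) by nra. nra.
  - intros H3'. assert (0 < v DC * ((T - Rw) * p DC - (Rw - S) * (1 - p CD))) by nra. nra.
Qed.

Theorem corollary2p2 (T Rw P S : R) (p : outcome -> R) :
  T > Rw -> Rw > P -> P > S -> 2 * Rw > T + S ->
  memory_one p -> agreeable p -> p CD < 1 ->
  (good T Rw P S p ->
     forall q1 q2 q3 q4 : R,
       is_prob q1 -> is_prob q2 -> is_prob q3 -> is_prob q4 ->
       ~ agreeable (qvec q1 q2 q3 q4) ->
       forall (x0 y0 : bool) (v : outcome -> R),
         limit_dist p x0 (ymem1 (qvec q1 q2 q3 q4) y0) v ->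
         sY T Rw P S v < Rw) /\
  (~ good T Rw P S p ->
     exists q : outcome -> R,
       (q = qvec 0 0 0 0 \/ q = qvec 0 1 1 1) /\
       forall (x0 y0 : bool) (v : outcome -> R),
         limit_dist p x0 (ymem1 q y0) v ->
         sY T Rw P S v >= Rw /\ sX T Rw P S v < Rw) /\
  (~ nash_type T Rw P S p ->
     exists q : outcome -> R,
       (q = qvec 0 0 0 0 \/ q = qvec 0 1 1 1) /\
       forall (x0 y0 : bool) (v : outcome -> R),
         limit_dist p x0 (ymem1 q y0) v ->
         sY T Rw P S v > Rw /\ sX T Rw P S v < Rw).
Proof.
  intros HTR HRP HPS H2R Hp Hagr Hp2. split; [|split].
  - intros [_ Hg] q1 q2 q3 q4 H1 H2 H3 H4 Hna x0 y0 v Hv.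
    assert (Hq := qvec_mem q1 q2 q3 q4 H1 H2 H3 H4).
    pose proof (ymem1_valid _ y0 Hq) as Hy.
    destruct (Rlt_dec (sY T Rw P S v) Rw) as [|Hge]; [assumption|exfalso].
    apply Rnot_lt_le in Hge.
    destruct (Hg x0 _ v Hy Hv ltac:(lra)) as [EY EX].
    destruct (dist_basic p x0 _ v Hp Hy Hv) as [a1 [a2 [a3 [a4 Hs]]]].
    pose proof (akinY p x0 _ y0 v Hp Hq Hv) as B. simpl in B.
    unfold sY, sX in *.
    assert (E : (v CD + v DC) * (2 * Rw - T - S) + 2 * v DD * (Rw - P) = 0).
    { replace (v CC) with (1 - v CD - v DC - v DD) in EY, EX by lra. nra. }
    assert (v DD = 0) by nra. assert (v CD + v DC = 0) by nra.
    assert (v CD = 0) by lra. assert (v DC = 0) by lra. assert (v CC = 1) by lra.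
    apply Hna. unfold agreeable; simpl. nra.
  - intros Hng.
    destruct (Rlt_dec ((T - Rw) * p DD) ((Rw - P) * (1 - p CD))) as [H4|H4].
    + destruct (Rlt_dec ((T - Rw) * p DC) ((Rw - S) * (1 - p CD))) as [H3|H3].
      * exfalso. apply Hng. apply strict_good; auto.
      * exists (qvec 0 1 1 1). split; [right; reflexivity|]. intros x0 y0 v Hv.
        destruct (c0111_case T Rw P S p HTR HRP HPS H2R Hp Hagr Hp2 ltac:(lra) x0 y0 v Hv) as [? [? _]].
        auto.
    + exists (qvec 0 0 0 0). split; [left; reflexivity|]. intros x0 y0 v Hv.
      destruct (allD_case T Rw P S p HTR HRP HPS Hp Hagr Hp2 ltac:(lra) x0 y0 v Hv) as [? [? _]].
      auto.
  - intros Hnn.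
    destruct (Rle_dec ((T - Rw) * p DD) ((Rw - P) * (1 - p CD))) as [H4|H4].
    + destruct (Rle_dec ((T - Rw) * p DC) ((Rw - S) * (1 - p CD))) as [H3|H3].
      * exfalso. apply Hnn. apply weak_nash; auto.
      * exists (qvec 0 1 1 1). split; [right; reflexivity|]. intros x0 y0 v Hv.
        destruct (c0111_case T Rw P S p HTR HRP HPS H2R Hp Hagr Hp2 ltac:(lra) x0 y0 v Hv) as [? [? H']].
        split; [apply H'; lra| auto].
    + exists (qvec 0 0 0 0). split; [left; reflexivity|]. intros x0 y0 v Hv.
      destruct (allD_case T Rw P S p HTR HRP HPS Hp Hagr Hp2 ltac:(lra) x0 y0 v Hv) as [? [? H']].
      split; [apply H'; lra| auto].
Qed.
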